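(* Assume $b_1\ne b_2$, $c_1\ne c_2$. If $\check{f}$ has at least one root, then exactly one of the following is true. 1. $\check{f}$ has exactly two roots $x_0$ and $x_1$ at which it changes sign, and $\widehat{f}$ has no roots. The derivative $\check{f}'$ is nonzero at $x_0$ and $x_1$. 2. $\check{f}$ has exactly one root $x_0$ at which it does not change sign, and $\widehat{f}$ has no roots. The derivative $\check{f}'$ also has a root at $x_0$. 3. $\check{f}$ has exactly one root $x_0$ at which it changes sign, and $\widehat{f}$ also has exactly one root $x_1$ at which it changes sign. The derivatives $\check{f}'(x_0)$ and $\widehat{f}'(x_1)$ are nonzero.
   Context: A function $f:\mathbb{R}^+\to\mathbb{R}^+$ is called strongly hyperbolic if: (1) $\lim_{x\to 0+} f(x)=+\infty$ and $\lim_{x\to+\infty} f(x)=0$; (2) $f$ is strictly convex; (3) for each $b\in\mathbb{R}$, $\lim_{x\to+\infty} f(x+b)/f(x)=1$; (4) $f$ is differentiable; (5) $\ln|f'(x)|$ is strictly convex. Let $f_1,f_2$ be strongly hyperbolic functions, let $a_1,a_2>0$ and $b_1,b_2,c_1,c_2\in\mathbb{R}$. Define $\check{f}:(\max\{-b_1,-b_2\},+\infty)\to\mathbb{R}$, $\check{f}(x)=a_1f_1(x+b_1)+c_1-a_2f_1(x+b_2)-c_2$, and $\widehat{f}:(-\infty,\min\{-b_1,-b_2\})\to\mathbb{R}$, $\widehat{f}(x)=-a_1f_2(-x-b_1)+c_1+a_2f_2(-x-b_2)-c_2$. *)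

(* Defs.v *)
From Stdlib Require Import Reals Lra.
From Coquelicot Require Import Coquelicot.
Open Scope R_scope.

Definition strictly_convex_pos (g : R -> R) : Prop :=
  forall x y t, 0 < x -> 0 < y -> x <> y -> 0 < t < 1 ->
    g (t * x + (1 - t) * y) < t * g x + (1 - t) * g y.

(* f : R^+ -> R^+ is represented by f : R -> R; only values on (0,+oo) matter. *)
Definition strongly_hyperbolic (f : R -> R) : Prop :=
  (forall x, 0 < x -> 0 < f x) /\
  filterlim f (at_right 0) (Rbar_locally p_infty) /\
  is_lim f p_infty 0 /\
  strictly_convex_pos f /\
  (forall b : R, is_lim (fun x => f (x + b) / f x) p_infty 1) /\
  (forall x, 0 < x -> ex_derive f x) /\
  strictly_convex_pos (fun x => ln (Rabs (Derive f x))).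

Definition fcheck (f1 : R -> R) (a1 a2 b1 b2 c1 c2 : R) (x : R) : R :=
  a1 * f1 (x + b1) + c1 - a2 * f1 (x + b2) - c2.

Definition fhat (f2 : R -> R) (a1 a2 b1 b2 c1 c2 : R) (x : R) : R :=
  - a1 * f2 (- x - b1) + c1 + a2 * f2 (- x - b2) - c2.

Definition in_dcheck (b1 b2 x : R) : Prop := Rmax (- b1) (- b2) < x.
Definition in_dhat (b1 b2 x : R) : Prop := x < Rmin (- b1) (- b2).

Definition changes_sign_at (g : R -> R) (x0 : R) : Prop :=
  exists d, 0 < d /\ forall x y, x0 - d < x < x0 -> x0 < y < x0 + d ->
    g x * g y < 0.

Definition keeps_sign_at (g : R -> R) (x0 : R) : Prop :=
  exists d, 0 < d /\ forall x y, x0 - d < x < x0 -> x0 < y < x0 + d ->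
    0 < g x * g y.

(* Main.v *)
Require Import Defs.
From Stdlib Require Import Reals Lra Psatz FunctionalExtensionality.
From Coquelicot Require Import Coquelicot.
Open Scope R_scope.

Lemma div_lt_helper (p q u v : R) : 0 < u -> 0 < v -> p * v < q * u -> p / u < q / v.
Proof.
  intros Hu Hv H.
  replace (p / u) with ((p * v) * / (u * v)) by (field; lra).
  replace (q / v) with ((q * u) * / (u * v)) by (field; lra).
  apply Rmult_lt_compat_r; [apply Rinv_0_lt_compat; nra | exact H].
Qed.

Lemma conv_key (g : R -> R) a b c : strictly_convex_pos g -> 0 < a -> a < b -> b < c ->
  (c - a) * g b < (c - b) * g a + (b - a) * g c.
Proof.
  intros Hg Ha Hab Hbc.
  set (t := (c - b) / (c - a)).
  assert (Ht : 0 < t < 1).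
  { unfold t; split.
    - apply Rdiv_lt_0_compat; lra.
    - apply (Rmult_lt_reg_r (c - a)); [lra|]. unfold Rdiv. rewrite Rmult_assoc, Rinv_l by lra. lra. }
  assert (Hb : t * a + (1 - t) * c = b) by (unfold t; field; lra).
  pose proof (Hg a c t Ha ltac:(lra) ltac:(lra) Ht) as H. rewrite Hb in H.
  assert (E1 : (c - a) * t = c - b) by (unfold t; field; lra).
  assert (E2 : (c - a) * (1 - t) = b - a) by (unfold t; field; lra).
  apply (Rmult_lt_compat_l (c - a)) in H; [|lra].
  rewrite Rmult_plus_distr_l, <- !Rmult_assoc, E1, E2 in H. exact H.
Qed.

Lemma chord1 (g : R -> R) a b c : strictly_convex_pos g -> 0 < a -> a < b -> b < c ->
  (g b - g a) / (b - a) < (g c - g a) / (c - a).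
Proof.
  intros Hg Ha Hab Hbc. pose proof (conv_key g a b c Hg Ha Hab Hbc).
  apply div_lt_helper; nra.
Qed.

Lemma chord2 (g : R -> R) a b c : strictly_convex_pos g -> 0 < a -> a < b -> b < c ->
  (g c - g a) / (c - a) < (g c - g b) / (c - b).
Proof.
  intros Hg Ha Hab Hbc. pose proof (conv_key g a b c Hg Ha Hab Hbc).
  apply div_lt_helper; nra.
Qed.

Lemma diff_incr (h : R -> R) u L m : strictly_convex_pos h -> 0 < u -> 0 < L -> 0 < m ->
  h (u + L) - h u < h (u + m + L) - h (u + m).
Proof.
  intros Hh Hu HL Hm.
  pose proof (chord1 h u (u + L) (u + m + L) Hh Hu ltac:(lra) ltac:(lra)) as H1.
  pose proof (chord2 h u (u + m) (u + m + L) Hh Hu ltac:(lra) ltac:(lra)) as H2.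
  replace (u + L - u) with L in H1 by ring.
  replace (u + m + L - (u + m)) with L in H2 by ring.
  assert (H : (h (u + L) - h u) / L < (h (u + m + L) - h (u + m)) / L) by lra.
  apply (Rmult_lt_compat_r L) in H; [|lra].
  unfold Rdiv in H. rewrite !Rmult_assoc, Rinv_l, !Rmult_1_r in H by lra. exact H.
Qed.

Lemma sh_pos f : strongly_hyperbolic f -> forall x, 0 < x -> 0 < f x.
Proof. intros H; apply H. Qed.
Lemma sh_conv f : strongly_hyperbolic f -> strictly_convex_pos f.
Proof. intros H; apply H. Qed.
Lemma sh_der f : strongly_hyperbolic f -> forall x, 0 < x -> ex_derive f x.
Proof. intros H; apply H. Qed.
Lemma sh_lnconv f : strongly_hyperbolic f -> strictly_convex_pos (fun x => ln (Rabs (Derive f x))).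
Proof. intros H; apply H. Qed.

Lemma sh_lim0 f : strongly_hyperbolic f -> forall eps, 0 < eps -> exists N, forall x, N < x -> f x < eps.
Proof.
  intros H eps Heps. destruct H as (_ & _ & Hl & _).
  apply is_lim_spec in Hl. destruct (Hl (mkposreal eps Heps)) as [N HN].
  exists N. intros x Hx. specialize (HN x Hx). simpl in HN.
  apply Rabs_lt_between' in HN. lra.
Qed.

Lemma sh_liminf f : strongly_hyperbolic f -> forall M, exists d, 0 < d /\ forall x, 0 < x < d -> M < f x.
Proof.
  intros H M. destruct H as (_ & Hl & _).
  assert (Hp : Rbar_locally p_infty (fun y => M < y)) by (exists M; auto).
  specialize (Hl _ Hp). destruct Hl as [e He].
  exists e; split; [apply cond_pos|]. intros x Hx. apply He; [|lra].
  unfold ball; simpl; unfold AbsRing_ball, abs, minus, plus, opp; simpl.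
  rewrite Rabs_right; lra.
Qed.

Lemma sh_ratio f : strongly_hyperbolic f -> forall b eps, 0 < eps ->
  exists N, forall x, N < x -> Rabs (f (x + b) / f x - 1) < eps.
Proof.
  intros H b eps Heps. destruct H as (_ & _ & _ & _ & Hl & _).
  specialize (Hl b). apply is_lim_spec in Hl. destruct (Hl (mkposreal eps Heps)) as [N HN].
  exists N. intros x Hx. exact (HN x Hx).
Qed.

Lemma sh_decr f : strongly_hyperbolic f -> forall x y, 0 < x -> x < y -> f y < f x.
Proof.
  intros H x y Hx Hxy.
  destruct (Rlt_or_le (f y) (f x)) as [|Hle]; [assumption|exfalso].
  assert (Hy : 0 < f y) by (apply (sh_pos f H); lra).
  destruct (sh_lim0 f H (f y) Hy) as [N HN].
  set (z := Rmax N y + 1).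
  assert (Hz1 : N < z) by (unfold z; pose proof (Rmax_l N y); lra).
  assert (Hz2 : y < z) by (unfold z; pose proof (Rmax_r N y); lra).
  pose proof (HN z Hz1).
  pose proof (conv_key f x y z (sh_conv f H) Hx Hxy Hz2). nra.
Qed.

Lemma sh_der_neg f : strongly_hyperbolic f -> forall x, 0 < x -> Derive f x < 0.
Proof.
  intros H x Hx.
  pose proof (Derive_correct f x (sh_der f H x Hx)) as Hd.
  apply is_derive_Reals in Hd.
  set (l := Derive f x) in *.
  set (s := f (x + 1) - f x).
  assert (Hs : s < 0) by (unfold s; pose proof (sh_decr f H x (x+1) Hx ltac:(lra)); lra).
  destruct (Rle_or_lt l s) as [|Hls]; [lra|exfalso].
  destruct (Hd (l - s) ltac:(lra)) as [del Hdel].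
  set (h := Rmin del 1 / 2).
  assert (Hh0' : 0 < h) by (unfold h; apply Rmin_case; pose proof (cond_pos del); lra).
  assert (Hh1 : h < 1) by (unfold h; pose proof (Rmin_r del 1); lra).
  assert (Hh2 : h < del) by (unfold h; pose proof (Rmin_l del 1); pose proof (cond_pos del); lra).
  specialize (Hdel h ltac:(lra) ltac:(rewrite Rabs_right; lra)).
  apply Rabs_lt_between' in Hdel.
  pose proof (chord1 f x (x + h) (x + 1) (sh_conv f H) Hx ltac:(lra) ltac:(lra)) as Hc.
  replace (x + h - x) with h in Hc by ring. replace (x + 1 - x) with 1 in Hc by ring.
  rewrite Rdiv_1_r in Hc. fold s in Hc. lra.
Qed.

Definition Gf f A B p q x := A * f (x + p) - B * f (x + q).
Definition dGf f A B p q x := A * Derive f (x + p) - B * Derive f (x + q).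

Lemma G_derive f A B p q x : strongly_hyperbolic f -> q < p -> - q < x ->
  is_derive (Gf f A B p q) x (dGf f A B p q x).
Proof.
  intros H Hpq Hx. unfold Gf, dGf.
  assert (Ep : ex_derive f (x + p)) by (apply (sh_der f H); lra).
  assert (Eq : ex_derive f (x + q)) by (apply (sh_der f H); lra).
  pose proof (Derive_correct f (x + p) Ep).
  pose proof (Derive_correct f (x + q) Eq).
  auto_derive.
  - auto.
  - rewrite !Rmult_1_l; reflexivity.
Qed.

Lemma F_derive f A B p q c1 c2 x : strongly_hyperbolic f -> q < p -> - q < x ->
  is_derive (fcheck f A B p q c1 c2) x (dGf f A B p q x).
Proof.
  intros H Hpq Hx. unfold fcheck, dGf.
  assert (Ep : ex_derive f (x + p)) by (apply (sh_der f H); lra).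
  assert (Eq : ex_derive f (x + q)) by (apply (sh_der f H); lra).
  pose proof (Derive_correct f (x + p) Ep).
  pose proof (Derive_correct f (x + q) Eq).
  auto_derive.
  - auto.
  - rewrite !Rmult_1_l; reflexivity.
Qed.

Lemma mvt_sign (g dg : R -> R) y z : y < z ->
  (forall c, y <= c <= z -> is_derive g c (dg c)) ->
  exists c, y <= c <= z /\ g z - g y = dg c * (z - y).
Proof.
  intros Hyz Hd.
  destruct (MVT_gen g y z dg) as [c [Hc E]].
  - intros x Hx. rewrite Rmin_left, Rmax_right in Hx by lra. apply Hd; lra.
  - intros x Hx. rewrite Rmin_left, Rmax_right in Hx by lra.
    apply continuity_pt_filterlim.
    assert (E : ex_derive g x) by (exists (dg x); apply Hd; lra).
    exact (ex_derive_continuous g x E).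
  - rewrite Rmin_left, Rmax_right in Hc by lra. exists c; split; auto.
Qed.

Lemma G_mvt f A B p q y z : strongly_hyperbolic f -> q < p -> - q < y -> y < z ->
  exists c, y <= c <= z /\ Gf f A B p q z - Gf f A B p q y = dGf f A B p q c * (z - y).
Proof.
  intros H Hpq Hy Hyz. apply mvt_sign; auto. intros c Hc. apply G_derive; auto; lra.
Qed.

Lemma dG_sign f A B p q x0 x : strongly_hyperbolic f -> 0 < A -> 0 < B -> q < p ->
  - q < x0 -> x0 < x ->
  (dGf f A B p q x0 <= 0 -> dGf f A B p q x < 0) /\
  (0 <= dGf f A B p q x -> 0 < dGf f A B p q x0).
Proof.
  intros H HA HB Hpq Hx0 Hx.
  set (h := fun y => ln (Rabs (Derive f y))).
  assert (Hinc : h (x0 + p) - h (x0 + q) < h (x + p) - h (x + q)).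
  { pose proof (diff_incr h (x0 + q) (p - q) (x - x0) (sh_lnconv f H) ltac:(lra) ltac:(lra) ltac:(lra)) as K.
    replace (x0 + q + (p - q)) with (x0 + p) in K by ring.
    replace (x0 + q + (x - x0) + (p - q)) with (x + p) in K by ring.
    replace (x0 + q + (x - x0)) with (x + q) in K by ring. exact K. }
  assert (Hl : forall y, - q < y -> ln (A * - Derive f (y + p)) - ln (B * - Derive f (y + q))
                = ln A - ln B + (h (y + p) - h (y + q))).
  { intros y Hy. pose proof (sh_der_neg f H (y + p) ltac:(lra)).
    pose proof (sh_der_neg f H (y + q) ltac:(lra)).
    rewrite !ln_mult by lra. unfold h. rewrite !Rabs_left by lra. ring. }
  pose proof (Hl x0 Hx0) as L0. pose proof (Hl x ltac:(lra)) as L1.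
  pose proof (sh_der_neg f H (x0 + p) ltac:(lra)).
  pose proof (sh_der_neg f H (x0 + q) ltac:(lra)).
  pose proof (sh_der_neg f H (x + p) ltac:(lra)).
  pose proof (sh_der_neg f H (x + q) ltac:(lra)).
  unfold dGf. split; intros Hd.
  - assert (E : ln (B * - Derive f (x0 + q)) <= ln (A * - Derive f (x0 + p))).
    { destruct (Req_dec (B * - Derive f (x0 + q)) (A * - Derive f (x0 + p))) as [e|ne].
      - rewrite e; lra.
      - left; apply ln_increasing; nra. }
    assert (E2 : ln (B * - Derive f (x + q)) < ln (A * - Derive f (x + p))) by lra.
    apply ln_lt_inv in E2; nra.
  - assert (E : ln (A * - Derive f (x + p)) <= ln (B * - Derive f (x + q))).
    { destruct (Req_dec (B * - Derive f (x + q)) (A * - Derive f (x + p))) as [e|ne].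
      - rewrite e; lra.
      - left; apply ln_increasing; nra. }
    assert (E2 : ln (A * - Derive f (x0 + p)) < ln (B * - Derive f (x0 + q))) by lra.
    apply ln_lt_inv in E2; nra.
Qed.

Lemma G_left f A B p q M y : strongly_hyperbolic f -> 0 < A -> 0 < B -> q < p -> - q < y ->
  exists x, - q < x < y /\ Gf f A B p q x < M.
Proof.
  intros H HA HB Hpq Hy.
  destruct (sh_liminf f H ((A * f (p - q) - M) / B)) as [d [Hd Hf]].
  set (x := - q + Rmin d (y + q) / 2).
  assert (Hm : 0 < Rmin d (y + q)) by (apply Rmin_case; lra).
  assert (Hm1 : Rmin d (y + q) <= d) by apply Rmin_l.
  assert (Hm2 : Rmin d (y + q) <= y + q) by apply Rmin_r.
  exists x. split; [unfold x; lra|].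
  pose proof (Hf (x + q) ltac:(unfold x; lra)) as H1.
  pose proof (sh_decr f H (p - q) (x + p) ltac:(lra) ltac:(unfold x; lra)) as H2.
  unfold Gf.
  assert (E : B * ((A * f (p - q) - M) / B) = A * f (p - q) - M) by (field; lra).
  nra.
Qed.

Lemma G_right_up f A B p q eps y : strongly_hyperbolic f -> 0 < A -> 0 < B -> q < p -> - q < y -> 0 < eps ->
  exists x, y < x /\ Gf f A B p q x < eps.
Proof.
  intros H HA HB Hpq Hy He.
  destruct (sh_lim0 f H (eps / A) ltac:(apply Rdiv_lt_0_compat; lra)) as [N HN].
  set (x := Rmax (N - p) y + 1).
  assert (H1 : N - p < x) by (unfold x; pose proof (Rmax_l (N - p) y); lra).
  assert (H2 : y < x) by (unfold x; pose proof (Rmax_r (N - p) y); lra).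
  exists x; split; auto.
  pose proof (HN (x + p) ltac:(lra)).
  pose proof (sh_pos f H (x + q) ltac:(lra)).
  unfold Gf.
  assert (E : A * (eps / A) = eps) by (field; lra).
  nra.
Qed.

Lemma G_right_low f A B p q eps y : strongly_hyperbolic f -> 0 < A -> 0 < B -> q < p -> - q < y -> 0 < eps ->
  exists x, y < x /\ - eps < Gf f A B p q x.
Proof.
  intros H HA HB Hpq Hy He.
  destruct (sh_lim0 f H (eps / B) ltac:(apply Rdiv_lt_0_compat; lra)) as [N HN].
  set (x := Rmax (N - q) y + 1).
  assert (H1 : N - q < x) by (unfold x; pose proof (Rmax_l (N - q) y); lra).
  assert (H2 : y < x) by (unfold x; pose proof (Rmax_r (N - q) y); lra).
  exists x; split; auto.
  pose proof (HN (x + q) ltac:(lra)).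
  pose proof (sh_pos f H (x + p) ltac:(lra)).
  unfold Gf.
  assert (E : B * (eps / B) = eps) by (field; lra).
  nra.
Qed.

Lemma G_neg f A B p q x : strongly_hyperbolic f -> 0 < A -> 0 < B -> q < p -> A <= B -> - q < x ->
  Gf f A B p q x < 0.
Proof.
  intros H HA HB Hpq HAB Hx.
  pose proof (sh_decr f H (x + q) (x + p) ltac:(lra) ltac:(lra)).
  pose proof (sh_pos f H (x + p) ltac:(lra)).
  unfold Gf. nra.
Qed.

Lemma G_somepos f A B p q : strongly_hyperbolic f -> 0 < A -> 0 < B -> q < p -> B < A ->
  exists x, - q < x /\ 0 < Gf f A B p q x.
Proof.
  intros H HA HB Hpq HAB.
  destruct (sh_ratio f H (p - q) ((A - B) / A) ltac:(apply Rdiv_lt_0_compat; lra)) as [N HN].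
  set (u := Rmax N 0 + 1).
  assert (H1 : N < u) by (unfold u; pose proof (Rmax_l N 0); lra).
  assert (H2 : 0 < u) by (unfold u; pose proof (Rmax_r N 0); lra).
  exists (u - q). split; [lra|].
  specialize (HN u H1). apply Rabs_lt_between' in HN.
  pose proof (sh_pos f H u H2).
  pose proof (sh_pos f H (u + (p - q)) ltac:(lra)).
  assert (E1 : f (u + (p - q)) / f u * f u = f (u + (p - q))) by (field; lra).
  assert (E2 : A * ((A - B) / A) = A - B) by (field; lra).
  unfold Gf. replace (u - q + p) with (u + (p - q)) by ring. replace (u - q + q) with u by ring.
  destruct HN as [HN _].
  assert (K : A * (1 - (A - B) / A) * f u < A * (f (u + (p - q)) / f u) * f u).
  { apply Rmult_lt_compat_r; [lra|]. apply Rmult_lt_compat_l; lra. }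
  nra.
Qed.

Lemma G_cont f A B p q x : strongly_hyperbolic f -> q < p -> - q < x -> continuity_pt (Gf f A B p q) x.
Proof.
  intros H Hpq Hx. apply continuity_pt_filterlim.
  assert (E : ex_derive (Gf f A B p q) x) by (eexists; apply G_derive; eauto).
  exact (ex_derive_continuous _ x E).
Qed.

Lemma typeI f A B p q : strongly_hyperbolic f -> 0 < A -> 0 < B -> q < p -> A <= B ->
  forall x, - q < x -> 0 < dGf f A B p q x.
Proof.
  intros H HA HB Hpq HAB x1 Hx1.
  destruct (Rlt_or_le 0 (dGf f A B p q x1)) as [|Hd]; [assumption|exfalso].
  set (x2 := x1 + 1).
  pose proof (G_neg f A B p q x2 H HA HB Hpq HAB ltac:(unfold x2; lra)) as Hn.
  destruct (G_right_low f A B p q (- Gf f A B p q x2) x2 H HA HB Hpq ltac:(unfold x2; lra) ltac:(lra)) as [x3 [H3 H3']].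
  destruct (G_mvt f A B p q x2 x3 H Hpq ltac:(unfold x2; lra) H3) as [c [Hc E]].
  pose proof (proj1 (dG_sign f A B p q x1 c H HA HB Hpq Hx1 ltac:(unfold x2 in Hc; lra)) Hd).
  nra.
Qed.

Lemma typeI_incr f A B p q y z : strongly_hyperbolic f -> 0 < A -> 0 < B -> q < p -> A <= B ->
  - q < y -> y < z -> Gf f A B p q y < Gf f A B p q z.
Proof.
  intros H HA HB Hpq HAB Hy Hyz.
  destruct (G_mvt f A B p q y z H Hpq Hy Hyz) as [c [Hc E]].
  pose proof (typeI f A B p q H HA HB Hpq HAB c ltac:(lra)). nra.
Qed.

Lemma typeII f A B p q : strongly_hyperbolic f -> 0 < A -> 0 < B -> q < p -> B < A ->
  exists xs, - q < xs /\ dGf f A B p q xs = 0 /\ 0 < Gf f A B p q xs /\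
    (forall y z, - q < y -> y < z -> z <= xs -> Gf f A B p q y < Gf f A B p q z) /\
    (forall y z, xs <= y -> y < z -> Gf f A B p q z < Gf f A B p q y) /\
    (forall x, xs < x -> 0 < Gf f A B p q x) /\
    (forall x, - q < x < xs -> 0 < dGf f A B p q x) /\
    (forall x, xs < x -> dGf f A B p q x < 0).
Proof.
  intros H HA HB Hpq HAB.
  set (G := Gf f A B p q). set (dG := dGf f A B p q).
  destruct (G_somepos f A B p q H HA HB Hpq HAB) as [x0 [Hx0 Hg0]].
  destruct (G_right_up f A B p q (G x0) x0 H HA HB Hpq Hx0 Hg0) as [b [Hb Hgb]].
  destruct (G_left f A B p q (G x0) x0 H HA HB Hpq Hx0) as [a [Ha Hga]].
  destruct (continuity_ab_maj G a b ltac:(lra)) as [xs [Hmax Hxs]].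
  { intros c Hc. apply G_cont; auto; lra. }
  pose proof (Hmax x0 ltac:(lra)) as Hm0.
  assert (Hxa : a < xs). { destruct (Req_dec a xs) as [e|]; [rewrite <- e in Hm0; fold G in Hga; fold G in Hgb; lra|lra]. }
  assert (Hxb : xs < b). { destruct (Req_dec b xs) as [e|]; [rewrite <- e in Hm0; fold G in Hga; fold G in Hgb; lra|lra]. }
  assert (Hd0 : dG xs = 0).
  { assert (Ex : ex_derive G xs) by (eexists; apply G_derive; eauto; lra).
    pose proof (deriv_maximum G a b xs (ex_derive_Reals_0 _ _ Ex) Hxa Hxb
      (fun x h1 h2 => Hmax x ltac:(lra))) as K.
    rewrite Derive_Reals in K. unfold G in K. rewrite (is_derive_unique _ _ _ (G_derive f A B p q xs H Hpq ltac:(lra))) in K.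
    exact K. }
  assert (Hl : forall x, - q < x < xs -> 0 < dG x).
  { intros x Hx. apply (proj2 (dG_sign f A B p q x xs H HA HB Hpq ltac:(lra) ltac:(lra))).
    fold dG; lra. }
  assert (Hr : forall x, xs < x -> dG x < 0).
  { intros x Hx. apply (proj1 (dG_sign f A B p q xs x H HA HB Hpq ltac:(lra) ltac:(lra))).
    fold dG; lra. }
  assert (Hinc : forall y z, - q < y -> y < z -> z <= xs -> G y < G z).
  { intros y z Hy Hyz Hz. set (m := (y + z) / 2).
    destruct (G_mvt f A B p q y m H Hpq Hy ltac:(unfold m; lra)) as [c1 [Hc1 E1]].
    destruct (G_mvt f A B p q m z H Hpq ltac:(unfold m; lra) ltac:(unfold m; lra)) as [c2 [Hc2 E2]].
    pose proof (Hl c1 ltac:(unfold m in Hc1; lra)).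
    assert (0 <= dG c2).
    { destruct (Req_dec c2 xs) as [e|ne]; [rewrite e; lra|left; apply Hl; unfold m in Hc2; lra]. }
    fold G dG in E1; fold G dG in E2. unfold m in *. nra. }
  assert (Hdec : forall y z, xs <= y -> y < z -> G z < G y).
  { intros y z Hy Hyz. set (m := (y + z) / 2).
    destruct (G_mvt f A B p q y m H Hpq ltac:(lra) ltac:(unfold m; lra)) as [c1 [Hc1 E1]].
    destruct (G_mvt f A B p q m z H Hpq ltac:(unfold m; lra) ltac:(unfold m; lra)) as [c2 [Hc2 E2]].
    pose proof (Hr c2 ltac:(unfold m in Hc2; lra)).
    assert (dG c1 <= 0).
    { destruct (Req_dec c1 xs) as [e|ne]; [rewrite e; lra|left; apply Hr; unfold m in Hc1; lra]. }
    fold G dG in E1; fold G dG in E2. unfold m in *. nra. }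
  assert (Hpos : forall x, xs < x -> 0 < G x).
  { intros r Hr0. destruct (Rlt_or_le 0 (G r)) as [|Hle]; [assumption|exfalso].
    pose proof (Hdec r (r + 1) ltac:(lra) ltac:(lra)) as K.
    assert (Hq : 0 < - G (r + 1)) by lra.
    assert (Hr1 : - q < r + 1) by lra.
    destruct (G_right_low f A B p q (- G (r + 1)) (r + 1) H HA HB Hpq Hr1 Hq) as [w [Hw Hw']].
    pose proof (Hdec (r + 1) w ltac:(lra) Hw). fold G in Hw'. lra. }
  exists xs. split; [lra|]. split; [exact Hd0|]. split. unfold G in Hm0; unfold G; lra.
  repeat split; assumption.
Qed.

Definition Zero (F : R -> R) (D : R -> Prop) := forall x, D x -> F x <> 0.
Definition One (F : R -> R) (D : R -> Prop) := exists x0, D x0 /\ F x0 = 0 /\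
  (forall x, D x -> F x = 0 -> x = x0) /\ changes_sign_at F x0 /\ Derive F x0 <> 0.
Definition Two (F : R -> R) (D : R -> Prop) := exists x0 x1, x0 <> x1 /\
  D x0 /\ F x0 = 0 /\ D x1 /\ F x1 = 0 /\
  (forall x, D x -> F x = 0 -> x = x0 \/ x = x1) /\
  changes_sign_at F x0 /\ changes_sign_at F x1 /\
  Derive F x0 <> 0 /\ Derive F x1 <> 0.
Definition Touch (F : R -> R) (D : R -> Prop) := exists x0, D x0 /\ F x0 = 0 /\
  (forall x, D x -> F x = 0 -> x = x0) /\ keeps_sign_at F x0 /\ Derive F x0 = 0.

Lemma cs_up (F : R -> R) x0 d : 0 < d -> (forall x, x0 - d < x < x0 -> F x < 0) ->
  (forall y, x0 < y < x0 + d -> 0 < F y) -> changes_sign_at F x0.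
Proof. intros Hd Hl Hr. exists d; split; auto. intros x y Hx Hy.
  pose proof (Hl x Hx); pose proof (Hr y Hy); nra. Qed.
Lemma cs_down (F : R -> R) x0 d : 0 < d -> (forall x, x0 - d < x < x0 -> 0 < F x) ->
  (forall y, x0 < y < x0 + d -> F y < 0) -> changes_sign_at F x0.
Proof. intros Hd Hl Hr. exists d; split; auto. intros x y Hx Hy.
  pose proof (Hl x Hx); pose proof (Hr y Hy); nra. Qed.
Lemma ks_neg (F : R -> R) x0 d : 0 < d -> (forall x, x0 - d < x < x0 -> F x < 0) ->
  (forall y, x0 < y < x0 + d -> F y < 0) -> keeps_sign_at F x0.
Proof. intros Hd Hl Hr. exists d; split; auto. intros x y Hx Hy.
  pose proof (Hl x Hx); pose proof (Hr y Hy); nra. Qed.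

Lemma ivt_G f A B p q t a b : strongly_hyperbolic f -> q < p -> - q < a -> a < b ->
  Gf f A B p q a < t -> t < Gf f A B p q b -> exists z, a < z < b /\ Gf f A B p q z = t.
Proof.
  intros H Hpq Ha Hab H1 H2.
  destruct (Ranalysis5.IVT_interv (fun x => Gf f A B p q x - t) a b) as [z [Hz E]].
  - intros c Hc. apply continuity_pt_minus; [apply G_cont; auto; lra| apply continuity_pt_const; intros u v; reflexivity].
  - exact Hab.
  - lra.
  - lra.
  - exists z. simpl in E. destruct Hz as [Hz1 Hz2].
    destruct (Req_dec a z); [subst; lra|]. destruct (Req_dec z b); [subst; lra|]. split; [lra|lra].
Qed.

Lemma ivt_G_dec f A B p q t a b : strongly_hyperbolic f -> q < p -> - q < a -> a < b ->
  t < Gf f A B p q a -> Gf f A B p q b < t -> exists z, a < z < b /\ Gf f A B p q z = t.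
Proof.
  intros H Hpq Ha Hab H1 H2.
  destruct (Ranalysis5.IVT_interv (fun x => t - Gf f A B p q x) a b) as [z [Hz E]].
  - intros c Hc. apply continuity_pt_minus; [apply continuity_pt_const; intros u v; reflexivity|apply G_cont; auto; lra].
  - exact Hab.
  - lra.
  - lra.
  - exists z. simpl in E. destruct Hz as [Hz1 Hz2].
    destruct (Req_dec a z); [subst; lra|]. destruct (Req_dec z b); [subst; lra|]. split; [lra|lra].
Qed.

Lemma core f A B p q c1 c2 : strongly_hyperbolic f -> 0 < A -> 0 < B -> q < p ->
  (c2 - c1 < 0 -> One (fcheck f A B p q c1 c2) (in_dcheck p q)) /\
  (0 < c2 - c1 -> A <= B -> Zero (fcheck f A B p q c1 c2) (in_dcheck p q)) /\
  (0 < c2 - c1 -> B < A -> Two (fcheck f A B p q c1 c2) (in_dcheck p q) \/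
      Touch (fcheck f A B p q c1 c2) (in_dcheck p q) \/ Zero (fcheck f A B p q c1 c2) (in_dcheck p q)) /\
  (forall x, in_dcheck p q x -> ex_derive (fcheck f A B p q c1 c2) x).
Proof.
  intros H HA HB Hpq.
  set (t := c2 - c1).
  set (F := fcheck f A B p q c1 c2).
  set (G := Gf f A B p q). set (dG := dGf f A B p q).
  assert (EF : forall x, F x = G x - t) by (intros x; unfold F, G, t, fcheck, Gf; ring).
  assert (DF : forall x, - q < x -> Derive F x = dG x).
  { intros x Hx. apply is_derive_unique. apply F_derive; auto. }
  assert (Dom : forall x, in_dcheck p q x <-> - q < x).
  { intros x; unfold in_dcheck. rewrite Rmax_right by lra. tauto. }
  assert (Root : forall x, F x = 0 <-> G x = t) by (intros x; rewrite EF; split; intros; lra).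
  split; [|split; [|split]].
  -
    intros Ht.
    destruct (Rle_or_lt A B) as [HAB|HAB].
    +
      destruct (G_right_low f A B p q (- t) (- q + 1) H HA HB Hpq ltac:(lra) ltac:(lra)) as [b [Hb Hgb]].
      destruct (G_left f A B p q t b H HA HB Hpq ltac:(lra)) as [a [Ha Hga]].
      destruct (ivt_G f A B p q t a b H Hpq ltac:(lra) ltac:(lra) Hga ltac:(lra)) as [z [Hz Ez]].
      fold G in Ez.
      assert (Hinc : forall y w, - q < y -> y < w -> G y < G w).
      { intros y w Hy Hyw. apply (typeI_incr f A B p q y w H HA HB Hpq HAB Hy Hyw). }
      exists z. split; [apply Dom; lra|]. split; [apply Root; auto|]. split; [|split].
      * intros r Hrr Hr0. apply Dom in Hrr. apply Root in Hr0.
        destruct (Rtotal_order r z) as [h|[h|h]]; auto.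
        -- pose proof (Hinc r z Hrr h); lra.
        -- pose proof (Hinc z r ltac:(lra) h); lra.
      * apply (cs_up F z (z + q)); [lra| |].
        -- intros x Hx. rewrite EF. pose proof (Hinc x z ltac:(lra) ltac:(lra)). lra.
        -- intros y Hy. rewrite EF. pose proof (Hinc z y ltac:(lra) ltac:(lra)). lra.
      * rewrite DF by lra. pose proof (typeI f A B p q H HA HB Hpq HAB z ltac:(lra)). fold dG in H0. lra.
    +
      destruct (typeII f A B p q H HA HB Hpq HAB) as (xs & Hxs & Hd0 & Hgxs & Hinc & Hdec & Hpos & Hl & Hr).
      fold G dG in Hd0, Hgxs, Hinc, Hdec, Hpos, Hl, Hr.
      destruct (G_left f A B p q t xs H HA HB Hpq Hxs) as [a [Ha Hga]].
      destruct (ivt_G f A B p q t a xs H Hpq ltac:(lra) ltac:(lra) Hga ltac:(fold G; lra)) as [z [Hz Ez]].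
      fold G in Ez.
      exists z. split; [apply Dom; lra|]. split; [apply Root; auto|]. split; [|split].
      * intros r Hrr Hr0. apply Dom in Hrr. apply Root in Hr0.
        destruct (Rle_or_lt r xs) as [h1|h1].
        -- destruct (Rtotal_order r z) as [h|[h|h]]; auto.
           ++ pose proof (Hinc r z Hrr h ltac:(lra)); lra.
           ++ pose proof (Hinc z r ltac:(lra) h h1); lra.
        -- pose proof (Hpos r h1); lra.
      * apply (cs_up F z (Rmin (z + q) (xs - z))); [apply Rmin_case; lra| |].
        -- intros x Hx. pose proof (Rmin_l (z + q) (xs - z)). rewrite EF.
           pose proof (Hinc x z ltac:(lra) ltac:(lra) ltac:(lra)). lra.
        -- intros y Hy. pose proof (Rmin_r (z + q) (xs - z)). rewrite EF.
           pose proof (Hinc z y ltac:(lra) ltac:(lra) ltac:(lra)). lra.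
      * rewrite DF by lra. pose proof (Hl z ltac:(lra)). lra.
  - intros Ht HAB x Hx. apply Dom in Hx. rewrite EF.
    pose proof (G_neg f A B p q x H HA HB Hpq HAB Hx). fold G in H0. lra.
  - intros Ht HAB.
    destruct (typeII f A B p q H HA HB Hpq HAB) as (xs & Hxs & Hd0 & Hgxs & Hinc & Hdec & Hpos & Hl & Hr).
    fold G dG in Hd0, Hgxs, Hinc, Hdec, Hpos, Hl, Hr.
    assert (Hmax : forall x, - q < x -> x <> xs -> G x < G xs).
    { intros x Hx Hne. destruct (Rtotal_order x xs) as [h|[h|h]].
      - apply Hinc; lra.
      - contradiction.
      - apply Hdec; lra. }
    destruct (Rtotal_order t (G xs)) as [Hlt|[Heq|Hgt]].
    + left.
      destruct (G_left f A B p q t xs H HA HB Hpq Hxs) as [a [Ha Hga]].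
      destruct (ivt_G f A B p q t a xs H Hpq ltac:(lra) ltac:(lra) Hga ltac:(fold G; lra)) as [z1 [Hz1 Ez1]].
      destruct (G_right_up f A B p q t xs H HA HB Hpq Hxs Ht) as [b [Hb Hgb]].
      destruct (ivt_G_dec f A B p q t xs b H Hpq Hxs Hb ltac:(fold G; lra) Hgb) as [z2 [Hz2 Ez2]].
      fold G in Ez1, Ez2.
      exists z1, z2. split; [lra|].
      split; [apply Dom; lra|]. split; [apply Root; auto|].
      split; [apply Dom; lra|]. split; [apply Root; auto|].
      split; [|split; [|split; [|split]]].
      * intros r Hrr Hr0. apply Dom in Hrr. apply Root in Hr0.
        destruct (Rle_or_lt r xs) as [h1|h1].
        -- left. destruct (Rtotal_order r z1) as [h|[h|h]]; auto.
           ++ pose proof (Hinc r z1 Hrr h ltac:(lra)); lra.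
           ++ pose proof (Hinc z1 r ltac:(lra) h h1); lra.
        -- right. destruct (Rtotal_order r z2) as [h|[h|h]]; auto.
           ++ pose proof (Hdec r z2 ltac:(lra) h); lra.
           ++ pose proof (Hdec z2 r ltac:(lra) h); lra.
      * apply (cs_up F z1 (Rmin (z1 + q) (xs - z1))); [apply Rmin_case; lra| |].
        -- intros x Hx. pose proof (Rmin_l (z1 + q) (xs - z1)). rewrite EF.
           pose proof (Hinc x z1 ltac:(lra) ltac:(lra) ltac:(lra)). lra.
        -- intros y Hy. pose proof (Rmin_r (z1 + q) (xs - z1)). rewrite EF.
           pose proof (Hinc z1 y ltac:(lra) ltac:(lra) ltac:(lra)). lra.
      * apply (cs_down F z2 (z2 - xs)); [lra| |].
        -- intros x Hx. rewrite EF. pose proof (Hdec x z2 ltac:(lra) ltac:(lra)). lra.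
        -- intros y Hy. rewrite EF. pose proof (Hdec z2 y ltac:(lra) ltac:(lra)). lra.
      * rewrite DF by lra. pose proof (Hl z1 ltac:(lra)). lra.
      * rewrite DF by lra. pose proof (Hr z2 ltac:(lra)). lra.
    + right; left. exists xs. split; [apply Dom; lra|]. split; [apply Root; auto|]. split; [|split].
      * intros r Hrr Hr0. apply Dom in Hrr. apply Root in Hr0.
        destruct (Req_dec r xs); auto. pose proof (Hmax r Hrr H0). lra.
      * apply (ks_neg F xs (xs + q)); [lra| |].
        -- intros x Hx. rewrite EF. pose proof (Hmax x ltac:(lra) ltac:(lra)). lra.
        -- intros y Hy. rewrite EF. pose proof (Hmax y ltac:(lra) ltac:(lra)). lra.
      * rewrite DF by lra. exact Hd0.
    + right; right. intros x Hx. apply Dom in Hx. rewrite EF.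
      destruct (Req_dec x xs) as [e|ne]; [subst; lra|].
      pose proof (Hmax x Hx ne). lra.
  - intros x Hx. apply Dom in Hx. eexists. apply F_derive; auto.
Qed.

Lemma cs_neg (F : R -> R) x0 : changes_sign_at F x0 -> changes_sign_at (fun x => - F x) x0.
Proof. intros [d [Hd K]]. exists d; split; auto. intros x y Hx Hy. specialize (K x y Hx Hy). nra. Qed.
Lemma ks_negf (F : R -> R) x0 : keeps_sign_at F x0 -> keeps_sign_at (fun x => - F x) x0.
Proof. intros [d [Hd K]]. exists d; split; auto. intros x y Hx Hy. specialize (K x y Hx Hy). nra. Qed.
Lemma cs_refl (F : R -> R) x0 : changes_sign_at F (- x0) -> changes_sign_at (fun x => F (- x)) x0.
Proof. intros [d [Hd K]]. exists d; split; auto. intros x y Hx Hy.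
  specialize (K (- y) (- x) ltac:(lra) ltac:(lra)). nra. Qed.

Lemma Zero_neg F D : Zero F D -> Zero (fun x => - F x) D.
Proof. intros K x Hx. specialize (K x Hx). lra. Qed.
Lemma One_neg F D : One F D -> One (fun x => - F x) D.
Proof. intros (x0 & H1 & H2 & H3 & H4 & H5). exists x0. rewrite Derive_opp.
  repeat split; auto; try lra. intros x Hx Hf. apply H3; auto; lra. apply cs_neg; auto. Qed.
Lemma Two_neg F D : Two F D -> Two (fun x => - F x) D.
Proof. intros (x0 & x1 & H0 & H1 & H2 & H3 & H4 & H5 & H6 & H7 & H8 & H9). exists x0, x1. rewrite !Derive_opp.
  repeat split; auto; try lra. intros x Hx Hf. apply H5; auto; lra. apply cs_neg; auto. apply cs_neg; auto. Qed.
Lemma Touch_neg F D : Touch F D -> Touch (fun x => - F x) D.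
Proof. intros (x0 & H1 & H2 & H3 & H4 & H5). exists x0. rewrite Derive_opp.
  repeat split; auto; try lra. intros x Hx Hf. apply H3; auto; lra. apply ks_negf; auto. Qed.

Lemma Zero_dom F D E : (forall x, D x <-> E x) -> Zero F D -> Zero F E.
Proof. intros HE K x Hx. apply K, HE, Hx. Qed.
Lemma One_dom F D E : (forall x, D x <-> E x) -> One F D -> One F E.
Proof. intros HE (x0 & H1 & H2 & H3 & H4 & H5). exists x0.
  repeat split; auto. apply HE; auto. intros x Hx Hf. apply H3; auto. apply HE; auto. Qed.
Lemma Two_dom F D E : (forall x, D x <-> E x) -> Two F D -> Two F E.
Proof. intros HE (x0 & x1 & H0 & H1 & H2 & H3 & H4 & H5 & H6 & H7 & H8 & H9). exists x0, x1.
  repeat split; auto; try (apply HE; auto). intros x Hx Hf. apply H5; auto. apply HE; auto. Qed.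
Lemma Touch_dom F D E : (forall x, D x <-> E x) -> Touch F D -> Touch F E.
Proof. intros HE (x0 & H1 & H2 & H3 & H4 & H5). exists x0.
  repeat split; auto. apply HE; auto. intros x Hx Hf. apply H3; auto. apply HE; auto. Qed.

Lemma Derive_refl (F : R -> R) y : ex_derive F (- y) -> Derive (fun x => F (- x)) y = - Derive F (- y).
Proof.
  intros E. rewrite (Derive_comp F Ropp y E).
  - replace (Derive Ropp y) with (-1 : R) by (symmetry; apply is_derive_unique; change (is_derive (fun x => - x) y (-1)); auto_derive; auto; lra). lra.
  - change (ex_derive (fun x => - x) y). auto_derive; auto.
Qed.

Lemma Zero_refl F D : Zero F D -> Zero (fun x => F (- x)) (fun x => D (- x)).
Proof. intros K x Hx. apply K, Hx. Qed.
Lemma One_refl F D : (forall x, D x -> ex_derive F x) -> One F D -> One (fun x => F (- x)) (fun x => D (- x)).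
Proof. intros Hd (x0 & H1 & H2 & H3 & H4 & H5). exists (- x0).
  rewrite Derive_refl; rewrite Ropp_involutive; auto.
  repeat split; auto; try lra.
  - intros x Hx Hf. specialize (H3 _ Hx Hf). lra.
  - apply cs_refl. rewrite Ropp_involutive; auto.
Qed.

Lemma combine Fc Fh D E t A B : t <> 0 -> ~ Zero Fc D ->
  (t < 0 -> One Fc D) -> (0 < t -> A <= B -> Zero Fc D) ->
  (0 < t -> B < A -> Two Fc D \/ Touch Fc D \/ Zero Fc D) ->
  (t < 0 -> One Fh E) -> (0 < t -> B <= A -> Zero Fh E) ->
  (Two Fc D /\ Zero Fh E) \/ (Touch Fc D /\ Zero Fh E) \/ (One Fc D /\ One Fh E).
Proof.
  intros Ht NZ H1 H2 H3 H4 H5.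
  destruct (Rtotal_order t 0) as [h|[h|h]]; [right; right; auto|lra|].
  destruct (Rle_or_lt A B) as [hab|hab]; [exfalso; apply NZ; auto|].
  destruct (H3 h hab) as [K|[K|K]]; [left|right;left|exfalso; apply NZ; auto]; split; auto; apply H5; lra.
Qed.

Lemma final_logic (fc fh : R -> R) (Dc Dh : R -> Prop) :
  (Two fc Dc /\ Zero fh Dh) \/ (Touch fc Dc /\ Zero fh Dh) \/ (One fc Dc /\ One fh Dh) ->
  let P1 :=
    (exists x0 x1, x0 <> x1 /\
       Dc x0 /\ fc x0 = 0 /\ Dc x1 /\ fc x1 = 0 /\
       (forall x, Dc x -> fc x = 0 -> x = x0 \/ x = x1) /\
       changes_sign_at fc x0 /\ changes_sign_at fc x1 /\
       Derive fc x0 <> 0 /\ Derive fc x1 <> 0) /\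
    (forall x, Dh x -> fh x <> 0) in
  let P2 :=
    (exists x0,
       Dc x0 /\ fc x0 = 0 /\
       (forall x, Dc x -> fc x = 0 -> x = x0) /\
       keeps_sign_at fc x0 /\ Derive fc x0 = 0) /\
    (forall x, Dh x -> fh x <> 0) in
  let P3 :=
    (exists x0 x1,
       Dc x0 /\ fc x0 = 0 /\
       (forall x, Dc x -> fc x = 0 -> x = x0) /\
       changes_sign_at fc x0 /\ Derive fc x0 <> 0 /\
       Dh x1 /\ fh x1 = 0 /\
       (forall x, Dh x -> fh x = 0 -> x = x1) /\
       changes_sign_at fh x1 /\ Derive fh x1 <> 0) in
  (P1 /\ ~ P2 /\ ~ P3) \/ (~ P1 /\ P2 /\ ~ P3) \/ (~ P1 /\ ~ P2 /\ P3).
Proof.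
  intros K P1 P2 P3.
  assert (N12 : ~ (P1 /\ P2)).
  { intros [[(x0 & x1 & Hne & Hd0 & Hf0 & Hd1 & Hf1 & _) _] [(y & _ & _ & U & _) _]].
    apply Hne. rewrite (U x0 Hd0 Hf0), (U x1 Hd1 Hf1). reflexivity. }
  assert (N13 : ~ (P1 /\ P3)).
  { intros [[(x0 & x1 & Hne & Hd0 & Hf0 & Hd1 & Hf1 & _) _] (y & _ & _ & _ & U & _)].
    apply Hne. rewrite (U x0 Hd0 Hf0), (U x1 Hd1 Hf1). reflexivity. }
  assert (N23 : ~ (P2 /\ P3)).
  { intros [[_ Z] (y & z & _ & _ & _ & _ & _ & Hz & Hfz & _)]. exact (Z z Hz Hfz). }
  destruct K as [[T Z]|[[T Z]|[O1 O2]]].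
  - assert (P1) by (split; [exact T|exact Z]). left. split; [auto|split; intro; [apply N12|apply N13]; auto].
  - assert (P2) by (split; [exact T|exact Z]). right; left. split; [intro; apply N12; auto|split; [auto|intro; apply N23; auto]].
  - assert (P3).
    { destruct O1 as (x0 & A1 & A2 & A3 & A4 & A5). destruct O2 as (x1 & B1 & B2 & B3 & B4 & B5).
      exists x0, x1. repeat split; auto. }
    right; right. split; [intro; apply N13; auto|split; [intro; apply N23; auto|auto]].
Qed.

Theorem lemma3p7 (f1 f2 : R -> R) (a1 a2 b1 b2 c1 c2 : R) :
  strongly_hyperbolic f1 -> strongly_hyperbolic f2 ->
  0 < a1 -> 0 < a2 -> b1 <> b2 -> c1 <> c2 ->
  (exists x, in_dcheck b1 b2 x /\ fcheck f1 a1 a2 b1 b2 c1 c2 x = 0) ->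
  let fc := fcheck f1 a1 a2 b1 b2 c1 c2 in
  let fh := fhat f2 a1 a2 b1 b2 c1 c2 in
  let P1 :=
    (exists x0 x1, x0 <> x1 /\
       in_dcheck b1 b2 x0 /\ fc x0 = 0 /\ in_dcheck b1 b2 x1 /\ fc x1 = 0 /\
       (forall x, in_dcheck b1 b2 x -> fc x = 0 -> x = x0 \/ x = x1) /\
       changes_sign_at fc x0 /\ changes_sign_at fc x1 /\
       Derive fc x0 <> 0 /\ Derive fc x1 <> 0) /\
    (forall x, in_dhat b1 b2 x -> fh x <> 0) in
  let P2 :=
    (exists x0,
       in_dcheck b1 b2 x0 /\ fc x0 = 0 /\
       (forall x, in_dcheck b1 b2 x -> fc x = 0 -> x = x0) /\
       keeps_sign_at fc x0 /\ Derive fc x0 = 0) /\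
    (forall x, in_dhat b1 b2 x -> fh x <> 0) in
  let P3 :=
    (exists x0 x1,
       in_dcheck b1 b2 x0 /\ fc x0 = 0 /\
       (forall x, in_dcheck b1 b2 x -> fc x = 0 -> x = x0) /\
       changes_sign_at fc x0 /\ Derive fc x0 <> 0 /\
       in_dhat b1 b2 x1 /\ fh x1 = 0 /\
       (forall x, in_dhat b1 b2 x -> fh x = 0 -> x = x1) /\
       changes_sign_at fh x1 /\ Derive fh x1 <> 0) in
  (P1 /\ ~ P2 /\ ~ P3) \/ (~ P1 /\ P2 /\ ~ P3) \/ (~ P1 /\ ~ P2 /\ P3).
Proof.
  intros H1 H2 Ha1 Ha2 Hb Hc Hroot fc fh.
  apply final_logic.
  assert (NZ : ~ Zero fc (in_dcheck b1 b2)).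
  { intros Z. destruct Hroot as [x [Hx Hf]]. exact (Z x Hx Hf). }
  destruct (Rtotal_order b1 b2) as [hb|[hb|hb]]; [|contradiction|].
  -
    destruct (core f1 a2 a1 b2 b1 c2 c1 H1 Ha2 Ha1 hb) as (C1 & C2 & C3 & _).
    destruct (core f2 a1 a2 (-b1) (-b2) c2 c1 H2 Ha1 Ha2 ltac:(lra)) as (D1 & D2 & D3 & D4).
    assert (Efc : fc = fun x => - fcheck f1 a2 a1 b2 b1 c2 c1 x).
    { apply functional_extensionality; intros x. unfold fc, fcheck. ring. }
    assert (Efh : fh = fun x => - (fun y => fcheck f2 a1 a2 (-b1) (-b2) c2 c1 (- y)) x).
    { apply functional_extensionality; intros x. unfold fh, fhat, fcheck; cbv beta; unfold Rminus; ring. }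
    assert (Dc : forall x, in_dcheck b2 b1 x <-> in_dcheck b1 b2 x).
    { intros x. unfold in_dcheck. rewrite Rmax_comm. tauto. }
    assert (Dh : forall x, (fun y => in_dcheck (-b1) (-b2) (- y)) x <-> in_dhat b1 b2 x).
    { intros x. unfold in_dcheck, in_dhat. simpl. rewrite !Ropp_involutive.
      rewrite Rmin_right by lra. rewrite Rmax_right by lra. split; intros; lra. }
    rewrite Efc in NZ |- *. rewrite Efh.
    apply (combine _ _ _ _ (c1 - c2) a2 a1); [lra| exact NZ | | | | |].
    + intros h. apply (One_dom _ _ _ Dc), One_neg, C1; lra.
    + intros h h'. apply (Zero_dom _ _ _ Dc), Zero_neg, C2; lra.
    + intros h h'. destruct (C3 ltac:(lra) h') as [K|[K|K]].
      * left. apply (Two_dom _ _ _ Dc), Two_neg, K.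
      * right; left. apply (Touch_dom _ _ _ Dc), Touch_neg, K.
      * right; right. apply (Zero_dom _ _ _ Dc), Zero_neg, K.
    + intros h. apply (One_dom _ _ _ Dh), One_neg, One_refl; [exact D4|]. apply D1; lra.
    + intros h h'. apply (Zero_dom _ _ _ Dh), Zero_neg, Zero_refl. apply D2; lra.
  -
    destruct (core f1 a1 a2 b1 b2 c1 c2 H1 Ha1 Ha2 hb) as (C1 & C2 & C3 & _).
    destruct (core f2 a2 a1 (-b2) (-b1) c1 c2 H2 Ha2 Ha1 ltac:(lra)) as (D1 & D2 & D3 & D4).
    assert (Efh : fh = fun x => fcheck f2 a2 a1 (-b2) (-b1) c1 c2 (- x)).
    { apply functional_extensionality; intros x. unfold fh, fhat, fcheck; cbv beta; unfold Rminus; ring. }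
    assert (Dh : forall x, (fun y => in_dcheck (-b2) (-b1) (- y)) x <-> in_dhat b1 b2 x).
    { intros x. unfold in_dcheck, in_dhat. simpl. rewrite !Ropp_involutive.
      rewrite Rmin_left by lra. rewrite Rmax_right by lra. split; intros; lra. }
    rewrite Efh.
    apply (combine _ _ _ _ (c2 - c1) a1 a2); [lra| exact NZ | exact C1 | exact C2 | exact C3 | |].
    + intros h. apply (One_dom _ _ _ Dh), One_refl; [exact D4|]. apply D1; lra.
    + intros h h'. apply (Zero_dom _ _ _ Dh), Zero_refl. apply D2; lra.
Qed.
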